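(* Let $S$ be a nonempty subset of $\mathbb{R}^m$. Then $\operatorname{Face}_{\mathcal{A}_{\bm o}}\big(\operatorname{Sign}_{\mathcal{A}_{\bm o}}(S)\big)=S$ if and only if $S$ is an open face of $\delta\mathcal{A}_{\bm o}$.
   Context: Fix nonzero $\bm u_1,\dots,\bm u_m\in\mathbb{R}^n$ (repetitions and parallel vectors allowed). For $\bm a\in\mathbb{R}^m$, $\mathcal{A}_{\bm a}$ is the arrangement of hyperplanes $\langle\bm u_i,\bm x\rangle=a_i$, $i=1,\dots,m$; the sign vector of $\bm x$ is $(\operatorname{sign}(\langle\bm u_i,\bm x\rangle-a_i))_{i=1}^m$, and $\operatorname{sign}(\mathcal{A}_{\bm a})\subseteq\{+,0,-\}^m$ is the set of all such sign vectors. Sign operator: for $S\subseteq\mathbb{R}^m$, $\operatorname{Sign}_{\mathcal{A}_{\bm o}}(S)=\bigcup_{\bm a\in S}\operatorname{sign}(\mathcal{A}_{\bm a})$. Face operator: for $\bm s\in\{+,0,-\}^m$, $\operatorname{Face}_{\mathcal{A}_{\bm o}}(\bm s)=\{\bm a\in\mathbb{R}^m:\bm s\in\operatorname{sign}(\mathcal{A}_{\bm a})\}$, and for $T\subseteq\{+,0,-\}^m$, $\operatorname{Face}_{\mathcal{A}_{\bm o}}(T)=\bigcap_{\bm s\in T}\operatorname{Face}_{\mathcal{A}_{\bm o}}(\bm s)$. A circuit is $C\subseteq[m]$ with $\{\bm u_i:i\in C\}$ a minimal linearly dependent indexed family; $\bm c^C$ satisfies $\sum c_i\bm u_i=\bm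 0$, $c_i\ne0\iff i\in C$. The derived arrangement $\delta\mathcal{A}_{\bm o}$ consists of hyperplanes $\langle\bm c^C,\bm y\rangle=0$ in $\mathbb{R}^m$; its open faces are the nonempty sets $\{\bm y:\operatorname{sign}\langle\bm c^C,\bm y\rangle=\epsilon_C\text{ for all circuits }C\}$ for fixed $\epsilon_C\in\{+,0,-\}$. *)

(* Defs.v *)
From HB Require Import structures.
From mathcomp Require Import all_boot all_order all_algebra.
From mathcomp Require Import boolp classical_sets reals.
Set Implicit Arguments. Unset Strict Implicit. Unset Printing Implicit Defensive.
Import Order.TTheory GRing.Theory Num.Theory.
Local Open Scope ring_scope.
Local Open Scope classical_set_scope.

Section Arr.
Variables (R : realType) (n m : nat) (u : 'I_m -> 'rV[R]_n).

Definition dotv (k : nat) (x y : 'rV[R]_k) : R := \sum_(j < k) x 0 j * y 0 j.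

(* sign vector of x in the arrangement A_a : <u_i, x> = a_i ;
   signs are encoded in int as -1, 0, 1 (sgz) *)
Definition signvec (a : 'rV[R]_m) (x : 'rV[R]_n) : 'I_m -> int :=
  fun i => sgz (dotv (u i) x - a 0 i).

Definition signs (a : 'rV[R]_m) : set ('I_m -> int) :=
  [set s | exists x : 'rV[R]_n, s = signvec a x].

Definition SignOp (S : set 'rV[R]_m) : set ('I_m -> int) :=
  [set s | exists2 a, S a & signs a s].

Definition Face1 (s : 'I_m -> int) : set 'rV[R]_m := [set a | signs a s].
Definition FaceOp (T : set ('I_m -> int)) : set 'rV[R]_m :=
  [set a | forall s, T s -> Face1 s a].

Definition lin_dep (C : {set 'I_m}) : Prop :=
  exists c : 'I_m -> R,
    (forall i, i \notin C -> c i = 0) /\ (exists i, c i != 0) /\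
    \sum_(i < m) c i *: u i = 0.

Definition circuit (C : {set 'I_m}) : Prop :=
  lin_dep C /\ forall D : {set 'I_m}, D \proper C -> ~ lin_dep D.

Definition circuit_vec (C : {set 'I_m}) (c : 'rV[R]_m) : Prop :=
  (forall i, (c 0 i != 0) = (i \in C)) /\ \sum_(i < m) c 0 i *: u i = 0.

Definition derived_open_face (cc : {set 'I_m} -> 'rV[R]_m) (S : set 'rV[R]_m) : Prop :=
  S !=set0 /\
  exists eps : {set 'I_m} -> int,
    S = [set y | forall C, circuit C -> sgz (dotv (cc C) y) = eps C].

End Arr.

(* Main.v *)
Require Import Defs.
From HB Require Import structures.
From mathcomp Require Import all_boot all_order all_algebra.
From mathcomp Require Import boolp classical_sets reals.
From mathcomp Require Import ring lra.
Import Order.TTheory GRing.Theory Num.Theory.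
Local Open Scope ring_scope.

Section Dot.
Context {R : realType}.

Lemma dotvC {k} (x y : 'rV[R]_k) : dotv x y = dotv y x.
Proof. by apply: eq_bigr => j _; rewrite mulrC. Qed.

Lemma dotvDl {k} (x y z : 'rV[R]_k) : dotv (x + y) z = dotv x z + dotv y z.
Proof. by rewrite /dotv -big_split; apply: eq_bigr => j _; rewrite mxE mulrDl. Qed.

Lemma dotvZl {k} c (x z : 'rV[R]_k) : dotv (c *: x) z = c * dotv x z.
Proof. by rewrite /dotv mulr_sumr; apply: eq_bigr => j _; rewrite mxE mulrA. Qed.

Lemma dotv0l {k} (z : 'rV[R]_k) : dotv 0 z = 0.
Proof. by rewrite /dotv big1 // => j _; rewrite mxE mul0r. Qed.

Lemma dotvDr {k} (x y z : 'rV[R]_k) : dotv z (x + y) = dotv z x + dotv z y.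
Proof. by rewrite dotvC dotvDl !(dotvC z). Qed.

Lemma dotvZr {k} c (x z : 'rV[R]_k) : dotv z (c *: x) = c * dotv z x.
Proof. by rewrite dotvC dotvZl dotvC. Qed.

Lemma dotvNl {k} (x z : 'rV[R]_k) : dotv (- x) z = - dotv x z.
Proof. by rewrite -scaleN1r dotvZl mulN1r. Qed.

Lemma dotvBl {k} (x y z : 'rV[R]_k) : dotv (x - y) z = dotv x z - dotv y z.
Proof. by rewrite dotvDl dotvNl. Qed.

Lemma dotvBr {k} (x y z : 'rV[R]_k) : dotv z (x - y) = dotv z x - dotv z y.
Proof. by rewrite dotvC dotvBl !(dotvC z). Qed.

Lemma dotv_suml {k} (I : Type) (r : seq I) (P : pred I) (F : I -> 'rV[R]_k) z :
  dotv (\sum_(i <- r | P i) F i) z = \sum_(i <- r | P i) dotv (F i) z.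
Proof. exact: (big_morph (fun x => dotv x z) (fun x y => dotvDl x y z) (dotv0l z)). Qed.

Lemma dot_pos {k} (b : 'rV[R]_k) : b != 0 -> 0 < dotv b b.
Proof.
move=> hb.
have [j hj] : exists j, b 0 j != 0.
  case: (pselect (exists j, b 0 j != 0)) => // H; exfalso.
  move/eqP: hb; apply; apply/rowP => j; rewrite mxE.
  by case: (b 0 j =P 0) => // /eqP h; case: H; exists j.
rewrite /dotv (bigD1 j) //=.
have h1 : 0 <= \sum_(i < k | i != j) b 0 i * b 0 i.
  by apply: sumr_ge0 => i _; rewrite -expr2; apply: sqr_ge0.
have h2 : 0 < b 0 j * b 0 j by rewrite -expr2 exprn_even_gt0 // hj orbT.
lra.
Qed.


Definition farkas_concl {d} {I : finType} (pos : pred I) (A : {set I})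
  (g : I -> 'rV[R]_d) (b : 'rV[R]_d) :=
 (exists mu : I -> R, (forall i, pos i -> 0 <= mu i) /\ \sum_(i in A) mu i *: g i = b)
 \/ (exists y, (forall i, i \in A -> pos i -> 0 <= dotv y (g i)) /\
      (forall i, i \in A -> ~~ pos i -> dotv y (g i) = 0) /\ dotv y b < 0).

Lemma farkas0 {d} {I : finType} (pos : pred I) (g : I -> 'rV[R]_d) b :
  farkas_concl pos (finset.set0 : {set I}) g b.
Proof.
case: (b =P 0) => [->|/eqP hb].
  by left; exists (fun _ => 0); split => //; rewrite big_set0.
right; exists (-b); split; first by move=> i; rewrite inE.
split; first by move=> i; rewrite inE.
by rewrite dotvNl oppr_lt0; apply: dot_pos.
Qed.

Lemma farkas_ind {d} {I : finType} (pos : pred I) N :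
  forall (A : {set I}) (g : I -> 'rV[R]_d) b, (#|A| <= N)%N -> farkas_concl pos A g b.
Proof.
elim: N => [|N IH] A g b hA.
  by move: hA; rewrite leqn0 => /eqP/cards0_eq ->; apply: farkas0.
case: (set_0Vmem A) => [-> | [k hk]]; first exact: farkas0.
have hA' : (#|A :\ k| <= N)%N by move: hA; rewrite (cardsD1 k) hk.
case: (IH (A :\ k) g b hA') => [[mu [hmu hsum]] | [y [hy1 [hy2 hyb]]]].
  left; exists (fun i => if i == k then 0 else mu i); split.
    by move=> i; case: ifP => // _; exact: hmu.
  rewrite (big_setD1 k hk) /= eqxx scale0r add0r -hsum; apply: eq_bigr => i.
  by rewrite !inE => /andP[hik _]; rewrite (negbTE hik).
set gam := dotv y (g k).
case: (pselect ((pos k -> 0 <= gam) /\ (~~ pos k -> gam = 0))) => [[h1 h2] | hn].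
  right; exists y; split.
    move=> i hi hp; case: (i =P k) hp => [->|/eqP ne] hp; first exact: h1.
    by apply: hy1 => //; rewrite !inE ne hi.
  split => //; move=> i hi hp; case: (i =P k) hp => [->|/eqP ne] hp; first exact: h2.
  by apply: hy2 => //; rewrite !inE ne hi.
have hgam : gam != 0.
  apply/eqP => h0; apply: hn; split => _; by rewrite h0.
have hneg : pos k -> gam < 0.
  move=> hp; rewrite lt_neqAle hgam /=; rewrite leNgt; apply/negP => hg.
  by apply: hn; split => [_|]; [exact: ltW | rewrite hp].
pose g' := fun i => g i - (dotv y (g i) / gam) *: g k.
pose b' := b - (dotv y b / gam) *: g k.
case: (IH (A :\ k) g' b' hA') => [[mu [hmu hsum]] | [y' [hy1' [hy2' hyb']]]].
  pose S := \sum_(i in A :\ k) mu i * (dotv y (g i) / gam).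
  pose kap := dotv y b / gam - S.
  left; exists (fun i => if i == k then kap else mu i); split.
    move=> i0; case: (i0 =P k) => [->|_] hp; last exact: hmu.
    have hSg : S * gam = \sum_(i in A :\ k) mu i * dotv y (g i).
      rewrite /S mulr_suml; apply: eq_bigr => j _; by rewrite -mulrA divfK.
    have hS0 : 0 <= \sum_(i in A :\ k) mu i * dotv y (g i).
      apply: sumr_ge0 => i hi; case: (boolP (pos i)) => hpi.
        by apply: mulr_ge0; [exact: hmu | apply: hy1].
      by rewrite hy2 // mulr0.
    have hk1 : kap * gam = dotv y b - S * gam by rewrite /kap mulrBl divfK.
    have hg := hneg hp.
    rewrite ?eqxx; rewrite hSg in hk1; nra.
  rewrite (big_setD1 k hk) /= eqxx.
  have -> : \sum_(i in A :\ k) (if i == k then kap else mu i) *: g i =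
            \sum_(i in A :\ k) mu i *: g i.
    by apply: eq_bigr => i; rewrite !inE => /andP[hik _]; rewrite (negbTE hik).
  have E : \sum_(i in A :\ k) mu i *: g i = b' + S *: g k.
    rewrite -hsum /g' /S scaler_suml -big_split /=; apply: eq_bigr => i _.
    by rewrite scalerBr scalerA subrK.
  rewrite E /b' /kap; apply/rowP => j; rewrite !mxE; ring.
right.
pose y'' := y' - (dotv y' (g k) / gam) *: y.
have hy'' : forall v, dotv y'' v = dotv y' (v - (dotv y v / gam) *: g k).
  move=> v; rewrite /y'' dotvBl dotvZl dotvBr dotvZr -/gam.
  field; exact: hgam.
exists y''; split.
  move=> i hi hp; case: (i =P k) => [->|/eqP ne].
    by rewrite hy'' -/gam divff // scale1r subrr dotvC dotv0l.
  by rewrite hy''; apply: hy1' => //; rewrite !inE ne hi.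
split.
  move=> i hi hp; case: (i =P k) => [->|/eqP ne].
    by rewrite hy'' -/gam divff // scale1r subrr dotvC dotv0l.
  by rewrite hy''; apply: hy2' => //; rewrite !inE ne hi.
by rewrite hy''.
Qed.

Lemma farkas {d} {I : finType} (pos : pred I) (A : {set I}) (g : I -> 'rV[R]_d) b :
  farkas_concl pos A g b.
Proof. exact: (@farkas_ind d I pos #|A| A g b (leqnn _)). Qed.

End Dot.

Section Motz.
Context {R : realType} {n m : nat} (u : 'I_m -> 'rV[R]_n).

Definition emb (x : 'rV[R]_n) (t e : R) : 'rV[R]_(n + 2) :=
  row_mx x (\row_(j < 2) if j == ord0 then t else e).

Lemma dot_emb (p : 'rV[R]_n) (q : 'rV[R]_2) x t e :
  dotv (row_mx p q) (emb x t e) = dotv p x + q 0 ord0 * t + q 0 (lift ord0 ord0) * e.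
Proof.
rewrite /dotv big_split_ord /= -addrA; congr (_ + _).
  by apply: eq_bigr => j _; rewrite /emb !row_mxEl.
rewrite !big_ord_recl big_ord0 addr0 /emb !row_mxEr !mxE /=.
done.
Qed.

Lemma dot_emb2 z t' e' x t e :
  dotv (emb z t' e') (emb x t e) = dotv z x + t' * t + e' * e.
Proof. by rewrite {1}/emb dot_emb !mxE. Qed.

Lemma dot_emb_y (y : 'rV[R]_(n + 2)) x t e :
  dotv y (emb x t e) = dotv (lsubmx y) x + rsubmx y 0 ord0 * t
     + rsubmx y 0 (lift ord0 ord0) * e.
Proof. by rewrite -{1}[y]hsubmxK dot_emb. Qed.

Lemma dotv0r {k} (z : 'rV[R]_k) : dotv z 0 = 0.
Proof. by rewrite dotvC dotv0l. Qed.

Lemma dotv_sumr {k} (I : Type) (r : seq I) (P : pred I) (F : I -> 'rV[R]_k) z :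
  dotv z (\sum_(i <- r | P i) F i) = \sum_(i <- r | P i) dotv z (F i).
Proof. by rewrite dotvC dotv_suml; apply: eq_bigr => i _; rewrite dotvC. Qed.

Lemma motz (a : 'rV[R]_m) (s : 'I_m -> int) (act : pred 'I_m) :
  (forall i, s i = 0 \/ s i = 1 \/ s i = -1) ->
  ~ (exists x, forall i, act i -> sgz (dotv (u i) x - a 0 i) = s i) ->
  exists lam : 'I_m -> R, (forall i, ~~ act i -> lam i = 0) /\
   (forall i, 0 <= lam i * (s i)%:~R) /\
   \sum_i lam i *: u i = 0 /\ 0 <= \sum_i lam i * a 0 i /\
   (0 < \sum_i lam i * a 0 i \/ exists i, s i != 0 /\ lam i != 0).
Proof.
move=> hs hnf.
pose kap i : R := if act i then (if s i == 0 then 1 else (s i)%:~R) else 0.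
pose del i : R := if act i && (s i != 0) then 1 else 0.
pose G i := emb (kap i *: u i) (- (kap i * a 0 i)) (- del i).
pose g (o : 'I_m.+1) := if unlift ord0 o is Some i then G i else emb 0 1 (-1).
pose pos (o : 'I_m.+1) := if unlift ord0 o is Some i then s i != 0 else true.
have hsum : forall (F : 'I_m.+1 -> 'rV[R]_(n+2)),
    \sum_(o in (finset.setTfor 'I_m.+1)) F o = F ord0 + \sum_i F (lift ord0 i).
  by move=> F; rewrite -big_ord_recl; apply: eq_bigl => o; rewrite inE.
case: (farkas pos (finset.setTfor 'I_m.+1) g (emb 0 0 (-1)))
   => [[mu [hmu H]] | [y [hy1 [hy2 hyb]]]]; last first.
  exfalso; apply: hnf.
  set x0 := lsubmx y; set t := rsubmx y 0 ord0; set e := rsubmx y 0 (lift ord0 ord0).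
  move: hyb; rewrite dot_emb_y -/x0 -/t -/e dotv0r => hyb.
  have he : 0 < e by lra.
  have ht : e <= t.
    have := hy1 ord0 (finset.in_setT _); rewrite /pos /g unlift_none => /(_ isT).
    rewrite dot_emb_y -/x0 -/t -/e dotv0r mulr1; lra.
  have htp : 0 < t by lra.
  exists (t^-1 *: x0) => i hi.
  have hyi1 := hy1 (lift ord0 i) (finset.in_setT _).
  have hyi2 := hy2 (lift ord0 i) (finset.in_setT _).
  rewrite /pos /g liftK /G dot_emb_y -/x0 -/t -/e dotvZr /kap /del hi /= in hyi1 hyi2.
  rewrite dotvZr dotvC.
  have key : t^-1 * dotv x0 (u i) - a 0 i = t^-1 * (dotv x0 (u i) - t * a 0 i).
    by field; rewrite lt0r_neq0.
  rewrite key sgzM gtr0_sgz ?invr_gt0 // mul1r.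
  case: (hs i) => [hs0|[hs1|hsm]].
  - rewrite hs0 eqxx /= in hyi2; rewrite hs0.
    have h0 := hyi2 isT.
    by apply/eqP; rewrite sgz_cp0; apply/eqP; nra.
  - rewrite hs1 /= in hyi1; rewrite hs1.
    have h0 := hyi1 isT.
    have h1 : ((1 : int)%:~R : R) = 1 by [].
    rewrite h1 in h0.
    by apply/eqP; rewrite sgz_cp0; nra.
  - rewrite hsm /= in hyi1; rewrite hsm.
    have h0 := hyi1 isT.
    have h1 : ((-1 : int)%:~R : R) = -1 by rewrite rmorphN rmorph1.
    rewrite h1 in h0.
    by apply/eqP; rewrite sgz_cp0; nra.
move: H; rewrite hsum /g unlift_none.
pose nu i := mu (lift ord0 i).
rewrite (eq_bigr (fun i => nu i *: G i)); last by move=> i _; rewrite liftK.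
move=> H.
have hdot : forall z, mu ord0 * dotv z (emb 0 1 (-1)) + \sum_i nu i * dotv z (G i)
                     = dotv z (emb 0 0 (-1)).
  move=> z; rewrite -H dotvDr dotvZr dotv_sumr; congr (_ + _).
  by apply: eq_bigr => i _; rewrite dotvZr.
pose lam i := nu i * kap i.
have hmu0 : 0 <= mu ord0 by apply: hmu; rewrite /pos unlift_none.
have hnu : forall i, s i != 0 -> 0 <= nu i by move=> i hi; apply: hmu; rewrite /pos liftK.
have ht := hdot (emb 0 1 0).
rewrite /G !dot_emb2 !dotv0l in ht.
rewrite (eq_bigr (fun i => - (lam i * a 0 i))) in ht; last by move=> i _; rewrite dot_emb2 dotv0l /lam; ring.
rewrite sumrN in ht.
have hA : \sum_i lam i * a 0 i = mu ord0 by lra.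
have he := hdot (emb 0 0 1).
rewrite /G !dot_emb2 !dotv0l in he.
rewrite (eq_bigr (fun i => - (nu i * del i))) in he; last by move=> i _; rewrite dot_emb2 dotv0l; ring.
rewrite sumrN in he.
have hD : \sum_i nu i * del i = 1 - mu ord0 by lra.
pose w := \sum_i lam i *: u i.
have hw := hdot (emb w 0 0).
rewrite /G !dot_emb2 !dotv0r in hw.
rewrite (eq_bigr (fun i => lam i * dotv w (u i))) in hw; last first.
  by move=> i _; rewrite dot_emb2 dotvZr /lam; ring.
have hww : dotv w w = 0.
  rewrite {2}/w dotv_sumr (eq_bigr (fun i => lam i * dotv w (u i))); first lra.
  by move=> i _; rewrite dotvZr.
have hw0 : w = 0.
  apply/eqP; apply: contraT => hne; have := @dot_pos R n w hne; lra.
exists lam; split.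
  by move=> i /negbTE hi; rewrite /lam /kap hi mulr0.
split.
  move=> i; rewrite /lam /kap; case: (boolP (act i)) => hi; last by rewrite mulr0 mul0r.
  case: (s i =P 0) => [->|/eqP hs0]; first by rewrite mulr0.
  have := hnu i hs0; nra.
split; first exact: hw0.
split; first by rewrite hA.
case: (ltrP 0 (mu ord0)) => hm; first by left; rewrite hA.
right.
case: (pselect (exists i, nu i * del i != 0)) => [[i hi] | hn]; last first.
  exfalso; have : \sum_i nu i * del i = 0.
    by apply: big1 => i _; apply/eqP; apply: contraT => h; case: hn; exists i.
  lra.
move: hi; rewrite /del; case: (boolP (act i && (s i != 0))) => [/andP[ha hs0] hi|]; last by rewrite mulr0 eqxx.
rewrite mulr1 in hi.
exists i; split => //; rewrite /lam /kap ha (negbTE hs0).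
by rewrite mulf_neq0 // intr_eq0.
Qed.

End Motz.

Section Trans.
Context {R : realType} {n m : nat} (u : 'I_m -> 'rV[R]_n).

Definition inW (lam : 'I_m -> R) := \sum_i lam i *: u i = 0.
Definition compat (s : 'I_m -> int) (lam : 'I_m -> R) := forall i, 0 <= lam i * (s i)%:~R.
Definition Phi (s : 'I_m -> int) (a : 'rV[R]_m) (lam : 'I_m -> R) :=
  \sum_i lam i * a 0 i <= 0 /\
  ((exists i, s i != 0 /\ lam i != 0) -> \sum_i lam i * a 0 i < 0).
Definition supp (lam : 'I_m -> R) : {set 'I_m} := [set i | lam i != 0].

Lemma term_nonneg (l d : R) (s : int) : sgz d = s -> 0 <= l * s%:~R ->
  0 <= l * d /\ (s != 0 -> l != 0 -> 0 < l * d).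
Proof.
move=> hs hl; case: (ltrgtP d 0) => hd.
- move: hs; rewrite ltr0_sgz // => hs; rewrite -hs in hl.
  have h1 : ((-1 : int)%:~R : R) = -1 by rewrite rmorphN rmorph1.
  rewrite h1 in hl; split; first nra.
  move=> _ hl0; have : l < 0 by rewrite lt_neqAle hl0 /=; nra.
  nra.
- move: hs; rewrite gtr0_sgz // => hs; rewrite -hs in hl.
  have h1 : ((1 : int)%:~R : R) = 1 by [].
  rewrite h1 in hl; split; first nra.
  move=> _ hl0; have : 0 < l by rewrite lt_neqAle eq_sym hl0 /=; nra.
  nra.
- move: hs; rewrite hd sgz0 => <-; by rewrite mulr0 eqxx.
Qed.

Lemma phi_feas (s : 'I_m -> int) (b : 'rV[R]_m) x lam :
  (forall i, sgz (dotv (u i) x - b 0 i) = s i) -> inW lam -> compat s lam -> Phi s b lam.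
Proof.
move=> hx hW hc.
have H0 : \sum_i lam i * dotv (u i) x = 0.
  transitivity (dotv (\sum_i lam i *: u i) x); last by rewrite hW dotv0l.
  by rewrite dotv_suml; apply: eq_bigr => i _; rewrite dotvZl.
have E : \sum_i lam i * (dotv (u i) x - b 0 i) =
         \sum_i lam i * dotv (u i) x - \sum_i lam i * b 0 i.
  by rewrite -sumrB; apply: eq_bigr => i _; ring.
have hT : forall i, 0 <= lam i * (dotv (u i) x - b 0 i) /\
    (s i != 0 -> lam i != 0 -> 0 < lam i * (dotv (u i) x - b 0 i)).
  by move=> i; apply: term_nonneg.
have hS : 0 <= \sum_i lam i * (dotv (u i) x - b 0 i).
  by apply: sumr_ge0 => i _; case: (hT i).
split; first lra.
move=> [i [hsi hli]].
have : 0 < \sum_i lam i * (dotv (u i) x - b 0 i).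
  rewrite (bigD1 i) //=; have h1 := (hT i).2 hsi hli.
  have h2 : 0 <= \sum_(j < m | j != i) lam j * (dotv (u j) x - b 0 j).
    by apply: sumr_ge0 => j _; case: (hT j).
  lra.
lra.
Qed.

Lemma argmin_ex (F : 'I_m -> R) (P : pred 'I_m) i0 :
  P i0 -> exists k, P k /\ (forall j, P j -> F k <= F j).
Proof.
move=> h0; exists (Order.arg_min i0 P F).
by case: (@arg_minP _ R _ i0 P F h0) => k hk hmin; split.
Qed.

Lemma step (lam c : 'I_m -> R) i0 : 0 < c i0 * lam i0 ->
  (forall i, c i != 0 -> lam i != 0) ->
  exists t, 0 < t /\ (forall i, lam i - t * c i != 0 -> 0 < (lam i - t * c i) * lam i)
    /\ (exists k, lam k != 0 /\ lam k - t * c k = 0).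
Proof.
move=> h0 hsupp.
pose P : pred 'I_m := fun i => 0 < c i * lam i.
have [k [hk hmin]] : exists k, P k /\ (forall j, P j -> lam k / c k <= lam j / c j).
  exact: (@argmin_ex (fun i => lam i / c i) P i0 h0).
have hck : c k != 0 by apply: contraTneq hk => hc; rewrite /P hc mul0r ltxx.
have hpos : 0 < lam k / c k.
  have -> : lam k / c k = (c k * lam k) / (c k * c k) by field.
  by apply: divr_gt0 => //; rewrite -expr2 exprn_even_gt0 // hck orbT.
exists (lam k / c k); split => //; split; last first.
  exists k; split; first by apply: contraTneq hk => hc; rewrite /P hc mulr0 ltxx.
  by rewrite divfK // subrr.
move=> i hi.
case: (boolP (lam i == 0)) => [/eqP hl0 | hl0].
  have hc0 : c i = 0 by apply/eqP; apply/negPn/negP => /hsupp; rewrite hl0 eqxx.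
  by move: hi; rewrite hl0 hc0 mulr0 subrr eqxx.
case: (boolP (P i)) => hPi.
  have hle := hmin i hPi.
  have hci : c i != 0 by apply: contraTneq hPi => hc; rewrite /P hc mul0r ltxx.
  set t := lam k / c k in hle hi *.
  have E : (lam i - t * c i) * lam i = (c i * lam i) * (lam i / c i - t).
    by field.
  rewrite E; apply: mulr_gt0 => //.
  rewrite subr_gt0 lt_neqAle hle andbT.
  apply: contra hi => /eqP ht; rewrite ht divfK // subrr.
  done.
have hPi' : c i * lam i <= 0 by rewrite leNgt.
have : 0 < lam i * lam i by rewrite -expr2 exprn_even_gt0 // hl0 orbT.
nra.
Qed.

Lemma phi_comb (s : 'I_m -> int) (a : 'rV[R]_m) (lam mu nu : 'I_m -> R) (al be : R) :
  Phi s a mu -> Phi s a nu -> 0 < al -> 0 < be ->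
  (forall i, lam i = al * mu i + be * nu i) -> Phi s a lam.
Proof.
move=> [h1 h2] [h3 h4] hal hbe hl.
have E : \sum_i lam i * a 0 i = al * \sum_i mu i * a 0 i + be * \sum_i nu i * a 0 i.
  rewrite !mulr_sumr -big_split /=; apply: eq_bigr => i _; rewrite hl; ring.
split; first by rewrite E; nra.
move=> [i [hsi hli]]; rewrite E.
case: (boolP (mu i == 0)) => [/eqP hm | hm].
  have hn : nu i != 0 by apply: contra hli => /eqP hn; rewrite hl hm hn !mulr0 addr0.
  have := h4 (ex_intro _ i (conj hsi hn)); nra.
have := h2 (ex_intro _ i (conj hsi hm)); nra.
Qed.


Lemma inW_sub (x y : 'I_m -> R) t : inW x -> inW y -> inW (fun i => x i - t * y i).
Proof.
rewrite /inW => hx hy.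
rewrite (eq_bigr (fun i => x i *: u i - t *: (y i *: u i))); last first.
  by move=> i _; rewrite scalerBl scalerA.
by rewrite sumrB -scaler_sumr hx hy scaler0 subr0.
Qed.

Lemma inW_opp (y : 'I_m -> R) : inW y -> inW (fun i => - y i).
Proof.
rewrite /inW => hy.
rewrite (eq_bigr (fun i => - (y i *: u i))); last by move=> i _; rewrite scaleNr.
by rewrite sumrN hy oppr0.
Qed.

Lemma conf_compat s (lam mu : 'I_m -> R) : compat s lam ->
  (forall i, mu i != 0 -> 0 < mu i * lam i) -> compat s mu.
Proof.
move=> hc hconf i; case: (boolP (mu i == 0)) => [/eqP -> | hm]; first by rewrite mul0r.
have h1 := hconf i hm; have h2 := hc i.
have h3 : 0 <= mu i * mu i * (lam i * (s i)%:~R).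
  by apply: mulr_ge0 => //; rewrite -expr2 sqr_ge0.
nra.
Qed.

Lemma conf_card (lam mu : 'I_m -> R) k :
  (forall i, mu i != 0 -> 0 < mu i * lam i) -> lam k != 0 -> mu k = 0 ->
  (#|supp mu| < #|supp lam|)%N.
Proof.
move=> hconf hk hmk; apply: (proper_card (A := supp mu) (B := supp lam)); apply/properP; split.
  apply/fintype.subsetP => i; rewrite !inE => /hconf h.
  by apply: contraTneq h => ->; rewrite mulr0 ltxx.
by exists k; rewrite !inE ?hk // hmk eqxx.
Qed.

Lemma circ_prop (C : {set 'I_m}) (c : 'rV[R]_m) lam :
  circuit u C -> circuit_vec u C c -> inW lam -> (forall i, (lam i != 0) = (i \in C)) ->
  exists al, al != 0 /\ forall i, lam i = al * c 0 i.
Proof.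
move=> [[c0 [hc01 [[j hj] hc03]]] hmin] [hcv1 hcv2] hW hsupp.
have jC : j \in C by apply: contraNT hj => /hc01 ->.
have hcj : c 0 j != 0 by rewrite hcv1.
have hlj : lam j != 0 by rewrite hsupp.
pose al := lam j / c 0 j.
have hW' : inW (fun i => lam i - al * c 0 i) by apply: inW_sub.
case: (pselect (exists i, lam i - al * c 0 i != 0)) => [[i hi] | hn].
  exfalso; apply: (hmin (C :\ j)); first exact: properD1.
  exists (fun i => lam i - al * c 0 i); split; last by split => //; exists i.
  move=> i'; rewrite !inE negb_and negbK => /orP[/eqP -> | hi'].
    by rewrite /al divfK // subrr.
  have h1 : lam i' = 0 by apply/eqP; rewrite -[_ == _]negbK hsupp.
  have h2 : c 0 i' = 0 by apply/eqP; rewrite -[_ == _]negbK hcv1.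
  by rewrite h1 h2 mulr0 subrr.
exists al; split; first by rewrite /al mulf_neq0 // invr_eq0.
move=> i; apply/eqP; rewrite -subr_eq0; apply/negPn/negP => h; apply: hn; by exists i.
Qed.

Lemma phi0 s (a : 'rV[R]_m) (lam : 'I_m -> R) : (forall i, lam i = 0) -> Phi s a lam.
Proof.
move=> h0; rewrite /Phi; have -> : \sum_i lam i * a 0 i = 0 by apply: big1 => i _; rewrite h0 mul0r.
by split => // -[i [_]]; rewrite h0 eqxx.
Qed.

Lemma transfer (cc : {set 'I_m} -> 'rV[R]_m)
  (hcc : forall C, circuit u C -> circuit_vec u C (cc C)) s a b :
  (forall C, circuit u C -> sgz (dotv (cc C) a) = sgz (dotv (cc C) b)) ->
  (forall lam, inW lam -> compat s lam -> Phi s b lam) ->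
  forall lam, inW lam -> compat s lam -> Phi s a lam.
Proof.
move=> Hc Hb.
suff H : forall N lam, (#|supp lam| < N)%N -> inW lam -> compat s lam -> Phi s a lam.
  by move=> lam; apply: (H (#|supp lam|).+1).
elim=> [//|N IH] lam hN hW hc.
case: (pselect (forall i, lam i = 0)) => [h0 | hnz]; first exact: phi0.
have [i1 hi1] : exists i, lam i != 0.
  apply: contrapT => hn; apply: hnz => i; apply/eqP; apply: contrapT => h; apply: hn.
  by exists i; apply/negP.
case: (pselect (circuit u (supp lam))) => [hC | hnC].
  have hs0 : forall i, (lam i != 0) = (i \in supp lam) by move=> i; rewrite inE.
  have [al [hal hl]] := @circ_prop (supp lam) (cc (supp lam)) lam hC (hcc _ hC) hW hs0.
  have Ea : \sum_i lam i * a 0 i = al * dotv (cc (supp lam)) a.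
    by rewrite /dotv mulr_sumr; apply: eq_bigr => i _; rewrite hl mulrA.
  have Eb : \sum_i lam i * b 0 i = al * dotv (cc (supp lam)) b.
    by rewrite /dotv mulr_sumr; apply: eq_bigr => i _; rewrite hl mulrA.
  have hsg : sgz (\sum_i lam i * a 0 i) = sgz (\sum_i lam i * b 0 i).
    by rewrite Ea Eb !sgzM Hc.
  have [hb1 hb2] := Hb lam hW hc.
  split; first by rewrite -sgz_le0 hsg sgz_le0.
  by move=> hex; rewrite -sgz_lt0 hsg sgz_lt0; apply: hb2.
have hld : lin_dep u (supp lam).
  exists lam; split; first by move=> i; rewrite inE negbK => /eqP.
  by split => //; exists i1.
have [D [hD [c [hc1 [[i2 hi2] hc3]]]]] : exists D : {set 'I_m}, D \proper supp lam /\ lin_dep u D.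
  apply: contrapT => hn; apply: hnC; split => // D hD hl; apply: hn; by exists D.
have hcs : forall i, c i != 0 -> lam i != 0.
  move=> i hi; have : i \in D by apply: contraNT hi => /hc1 ->.
  by move/(fintype.subsetP (proper_sub hD)); rewrite inE.
have hcard : forall c' : 'I_m -> R, (forall i, c' i != 0 -> c i != 0) ->
    (#|supp c'| < #|supp lam|)%N.
  move=> c' hc'; apply: leq_ltn_trans (proper_card hD).
  apply: subset_leq_card; apply/fintype.subsetP => i; rewrite inE => /hc' hi.
  by apply: contraNT hi => /hc1 ->.
have [c' [hc'W [hc's [hc'c [i0 hi0]]]]] : exists c' : 'I_m -> R, inW c' /\
    (forall i, c' i != 0 -> lam i != 0) /\ (#|supp c'| < #|supp lam|)%N /\
    exists i0, 0 < c' i0 * lam i0.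
  have hne : c i2 * lam i2 != 0 by rewrite mulf_neq0 // hcs.
  case: (ltrP 0 (c i2 * lam i2)) => hsg.
    exists c; split => //; split => //; split; last by exists i2.
    exact: hcard.
  exists (fun i => - c i); split; first exact: inW_opp.
  split; first by move=> i; rewrite oppr_eq0; apply: hcs.
  split; first by apply: hcard => i; rewrite oppr_eq0.
  exists i2; rewrite mulNr oppr_gt0 lt_neqAle hne; exact: hsg.
have hltN : forall mu : 'I_m -> R, (#|supp mu| < #|supp lam|)%N -> (#|supp mu| < N)%N.
  by move=> mu h; apply: leq_trans h _; rewrite -ltnS.
have [t1 [ht1 [hconf1 [k1 [hk1 hmk1]]]]] := @step lam c' i0 hi0 hc's.
have hP1 : Phi s a (fun i => lam i - t1 * c' i).
  apply: IH; first by apply: hltN; apply: conf_card hconf1 hk1 hmk1.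
    exact: inW_sub.
  exact: conf_compat hc hconf1.
case: (pselect (exists i, 0 < - c' i * lam i)) => [[i3 hi3] | hn].
  have hs2 : forall i, - c' i != 0 -> lam i != 0 by move=> i; rewrite oppr_eq0; apply: hc's.
  have [t2 [ht2 [hconf2 [k2 [hk2 hmk2]]]]] := @step lam (fun i => - c' i) i3 hi3 hs2.
  have hP2 : Phi s a (fun i => lam i - t2 * - c' i).
    apply: IH; first by apply: hltN; apply: conf_card hconf2 hk2 hmk2.
      by apply: inW_sub => //; apply: inW_opp.
    exact: conf_compat hc hconf2.
  apply: (@phi_comb s a lam _ _ (t2 / (t1 + t2)) (t1 / (t1 + t2)) hP1 hP2).
  - by apply: divr_gt0 => //; apply: addr_gt0.
  - by apply: divr_gt0 => //; apply: addr_gt0.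
  - by move=> i; field; apply: lt0r_neq0; apply: addr_gt0.
have hconfc : forall i, c' i != 0 -> 0 < c' i * lam i.
  move=> i hi; have hl := hc's i hi.
  have h1 : ~ (0 < - c' i * lam i) by move=> h; apply: hn; exists i.
  have h2 : c' i * lam i != 0 by rewrite mulf_neq0.
  rewrite lt_neqAle eq_sym h2 /=; move/negP: h1; rewrite mulNr oppr_gt0 -leNgt.
  done.
have hPc : Phi s a c'.
  apply: IH => //; first exact: hltN.
  exact: conf_compat hc hconfc.
apply: (@phi_comb s a lam _ _ 1 t1 hP1 hPc) => //.
by move=> i; ring.
Qed.

End Trans.

Section Main.
Context {R : realType} {n m : nat} (u : 'I_m -> 'rV[R]_n)
  (cc : {set 'I_m} -> 'rV[R]_m)
  (hcc : forall C, circuit u C -> circuit_vec u C (cc C)).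

Definition Equiv (a b : 'rV[R]_m) :=
  forall C, circuit u C -> sgz (dotv (cc C) a) = sgz (dotv (cc C) b).

Definition incl (b a : 'rV[R]_m) := forall s, signs u b s -> signs u a s.

Lemma sgz3 (d : R) : sgz d = 0 \/ sgz d = 1 \/ sgz d = -1.
Proof.
case: (ltrgtP d 0) => hd; [right; right; exact: ltr0_sgz | right; left; exact: gtr0_sgz |].
by left; rewrite hd sgz0.
Qed.

Lemma L1 a b : Equiv a b -> incl b a.
Proof.
move=> hE s0 [x ->]; apply: contrapT => hn.
pose s := signvec u b x.
have hs : forall i, s i = 0 \/ s i = 1 \/ s i = -1 by move=> i; apply: sgz3.
have hnf : ~ (exists x', forall i, predT i -> sgz (dotv (u i) x' - a 0 i) = s i).
  move=> [x' hx']; apply: hn; exists x'; apply: funext => i; exact: (esym (hx' i isT)).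
have [lam [_ [hc [hW [hA hdis]]]]] := @motz R n m u a s predT hs hnf.
have Hb : forall mu, inW u mu -> compat s mu -> Phi s b mu.
  by move=> mu; apply: (@phi_feas _ _ _ u s b x).
have [ha1 ha2] := @transfer R n m u cc hcc s a b hE Hb lam hW hc.
case: hdis => [h | h]; first by move: ha1; rewrite leNgt h.
by have := ha2 h; rewrite ltNge hA.
Qed.

Lemma dot_split (c : 'rV[R]_m) (r : 'rV[R]_m) y :
  \sum_i c 0 i *: u i = 0 ->
  dotv c r = \sum_i c 0 i * (r 0 i - dotv (u i) y).
Proof.
move=> hc.
have H0 : \sum_i c 0 i * dotv (u i) y = 0.
  transitivity (dotv (\sum_i c 0 i *: u i) y); last by rewrite hc dotv0l.
  by rewrite dotv_suml; apply: eq_bigr => i _; rewrite dotvZl.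
transitivity (\sum_i c 0 i * r 0 i - \sum_i c 0 i * dotv (u i) y).
  by rewrite H0 subr0.
by rewrite -sumrB; apply: eq_bigr => i _; ring.
Qed.

Lemma L2 a b : incl b a -> Equiv a b.
Proof.
move=> H C hC; have [hcv1 hcv2] := hcc _ hC.
have [[c0 [hc01 [[j hj] hc03]]] hmin] := hC.
have jC : j \in C by apply: contraNT hj => /hc01 ->.
set D := C :\ j.
have [x hx] : exists x, forall i, i \in D -> sgz (dotv (u i) x - b 0 i) = 0.
  apply: contrapT => hn.
  have hs : forall i : 'I_m, (0 : int) = 0 \/ (0 : int) = 1 \/ (0 : int) = -1 by left.
  have hnf : ~ (exists x, forall i, (fun i => i \in D) i ->
       sgz (dotv (u i) x - b 0 i) = (fun=> 0) i) by [].
  have [lam [hl1 [_ [hW [_ hdis]]]]] := @motz R n m u b (fun=> 0) (fun i => i \in D) hs hnf.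
  have hpos : 0 < \sum_i lam i * b 0 i.
    by case: hdis => // -[i [/eqP h _]].
  apply: (hmin D); first exact: properD1.
  exists lam; split; first by move=> i hi; apply: hl1.
  split => //.
  apply: contrapT => hz; move: hpos; rewrite big1 ?ltxx // => i _.
  suff -> : lam i = 0 by rewrite mul0r.
  by apply/eqP; apply: contrapT => h; apply: hz; exists i; apply/negP.
have [x' hx'] := H (signvec u b x) (ex_intro _ x erefl).
have hxx : forall i, sgz (dotv (u i) x - b 0 i) = sgz (dotv (u i) x' - a 0 i).
  by move=> i; have := congr1 (fun f => f i) hx'.
have hz : forall i, i != j -> cc C 0 i * (a 0 i - dotv (u i) x') = 0 /\
                             cc C 0 i * (b 0 i - dotv (u i) x) = 0.
  move=> i hij; case: (boolP (i \in C)) => hiC; last first.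
    have -> : cc C 0 i = 0 by apply/eqP; rewrite -[_ == _]negbK hcv1.
    by rewrite !mul0r.
  have hiD : i \in D by rewrite !inE hij.
  have h1 := hx i hiD; have h2 := h1; rewrite hxx in h2.
  move/eqP: h1; rewrite sgz_eq0 subr_eq0 => /eqP ->.
  move/eqP: h2; rewrite sgz_eq0 subr_eq0 => /eqP ->.
  by rewrite !subrr !mulr0.
have Ea : dotv (cc C) a = cc C 0 j * (a 0 j - dotv (u j) x').
  rewrite (@dot_split (cc C) a x' hcv2) (bigD1 j) //= big1 ?addr0 //.
  by move=> i hij; case: (hz i hij).
have Eb : dotv (cc C) b = cc C 0 j * (b 0 j - dotv (u j) x).
  rewrite (@dot_split (cc C) b x hcv2) (bigD1 j) //= big1 ?addr0 //.
  by move=> i hij; case: (hz i hij).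
by rewrite Ea Eb !sgzM -(opprB (dotv (u j) x')) -(opprB (dotv (u j) x)) !sgzN hxx.
Qed.

Lemma FaceOpE (S : set 'rV[R]_m) a :
  FaceOp u (SignOp u S) a <-> forall b, S b -> incl b a.
Proof.
split.
  by move=> H b hb s hs; apply: (H s); exists b.
by move=> H s [b hb hs]; apply: (H b hb s hs).
Qed.

End Main.

Local Open Scope classical_set_scope.

Theorem mainTheorem20 (R : realType) (n m : nat) (u : 'I_m -> 'rV[R]_n)
  (cc : {set 'I_m} -> 'rV[R]_m)
  (hu : forall i, u i != 0)
  (hcc : forall C, circuit u C -> circuit_vec u C (cc C))
  (S : set 'rV[R]_m) (hS : S !=set0) :
  FaceOp u (SignOp u S) = S <-> derived_open_face u cc S.
Proof.
have EqT : forall a b c, Equiv u cc a b -> Equiv u cc b c -> Equiv u cc a c.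
  by move=> a b c h1 h2 C hC; rewrite h1 // h2.
have EqS : forall a b, Equiv u cc a b -> Equiv u cc b a.
  by move=> a b h C hC; rewrite h.
split.
  move=> hEq; case: (hS) => b0 hb0; split => //.
  have inS : forall y, S y -> Equiv u cc y b0.
    move=> y hy; apply: (@L2 R n m u cc hcc).
    have : FaceOp u (SignOp u S) y by rewrite hEq.
    by move/FaceOpE; apply.
  exists (fun C => sgz (dotv (cc C) b0)).
  apply/seteqP; split => y /= hy.
    by move=> C hC; apply: (inS y hy).
  rewrite -hEq; apply/FaceOpE => b hb; apply: (@L1 R n m u cc hcc).
  apply: EqT (EqS _ _ (inS b hb)); exact: hy.
move=> [_ [eps hSeq]].
have inS : forall y, S y -> forall C, circuit u C -> sgz (dotv (cc C) y) = eps C.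
  by move=> y; rewrite hSeq.
apply/seteqP; split => a ha.
  case: (hS) => b0 hb0.
  have hE : Equiv u cc a b0.
    by apply: (@L2 R n m u cc hcc); move/FaceOpE: ha; apply.
  rewrite hSeq => C hC; rewrite hE //; exact: inS.
apply/FaceOpE => b hb; apply: (@L1 R n m u cc hcc) => C hC.
by rewrite (inS a ha C hC) (inS b hb C hC).
Qed.
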